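(* Let $n\in\mathbb{N}$ and let $\|\cdot\|_u$ be a unitarily-invariant norm on $\mathbb{M}_n(\mathbb{C})$. Let $N\in\mathbb{M}_n(\mathbb{C})$ be normal and $A\in\mathbb{M}_n(\mathbb{C})$, and suppose $\|p(A)\|_u=\|p(N)\|_u$ for every polynomial $p$ with complex coefficients. Then $A$ is normal. If moreover $\|\cdot\|_u$ separates projections by rank, then $A$ and $N$ are unitarily similar.
   Context: A norm $\|\cdot\|_u$ on $\mathbb{M}_n(\mathbb{C})$ is unitarily-invariant if $\|UXV\|_u=\|X\|_u$ for all $X$ and all unitaries $U,V$. It separates projections by rank if whenever $P,Q$ are orthogonal projections ($P=P^2=P^*$) with $\operatorname{rank}P\ne\operatorname{rank}Q$, then $\|P\|_u\neq\|Q\|_u$. *)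

(* Defs.v *)
(* Complex numbers are modelled by an arbitrary
   numClosedFieldType C. *)
From HB Require Import structures.
From mathcomp Require Import all_boot all_order all_algebra.
Set Implicit Arguments. Unset Strict Implicit. Unset Printing Implicit Defensive.
Import Order.TTheory GRing.Theory Num.Theory.
Local Open Scope ring_scope.

Definition adjmx (C : numClosedFieldType) (m n : nat) (A : 'M[C]_(m, n)) : 'M[C]_(n, m) :=
  (map_mx Num.conj A)^T.

(* k-th power of a square matrix (valid for every n, including n = 0) *)
Definition mxpow (C : numClosedFieldType) (n : nat) (A : 'M[C]_n) (k : nat) : 'M[C]_n :=
  iter k (fun B => A *m B) 1%:M.

Definition mxeval (C : numClosedFieldType) (n : nat) (p : {poly C}) (A : 'M[C]_n) : 'M[C]_n :=
  \sum_(i < size p) p`_i *: mxpow A i.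

Definition is_unitary (C : numClosedFieldType) (n : nat) (U : 'M[C]_n) : Prop :=
  U *m adjmx U = 1%:M.

Definition is_normal (C : numClosedFieldType) (n : nat) (A : 'M[C]_n) : Prop :=
  A *m adjmx A = adjmx A *m A.

Definition is_orth_proj (C : numClosedFieldType) (n : nat) (P : 'M[C]_n) : Prop :=
  P *m P = P /\ adjmx P = P.

(* a norm on M_n(C), with (real, nonnegative) values in C *)
Definition is_mxnorm (C : numClosedFieldType) (n : nat) (nu : 'M[C]_n -> C) : Prop :=
  (forall X, 0 <= nu X) /\
  (forall X, nu X = 0 -> X = 0) /\
  (forall (a : C) X, nu (a *: X) = `|a| * nu X) /\
  (forall X Y, nu (X + Y) <= nu X + nu Y).

Definition unitarily_invariant (C : numClosedFieldType) (n : nat) (nu : 'M[C]_n -> C) : Prop :=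
  forall X U V, is_unitary U -> is_unitary V -> nu (U *m X *m V) = nu X.

Definition separates_proj_by_rank (C : numClosedFieldType) (n : nat) (nu : 'M[C]_n -> C) : Prop :=
  forall P Q, is_orth_proj P -> is_orth_proj Q -> \rank P <> \rank Q -> nu P <> nu Q.

Definition unitarily_similar (C : numClosedFieldType) (n : nat) (A B : 'M[C]_n) : Prop :=
  exists U, is_unitary U /\ A = U *m B *m adjmx U.

(* Main.v *)
Require Import Defs.
From HB Require Import structures.
From mathcomp Require Import all_boot all_order all_algebra.
From mathcomp Require Import fingroup perm sesquilinear spectral.
From mathcomp Require Import ring.
Set Implicit Arguments. Unset Strict Implicit. Unset Printing Implicit Defensive.
Import Order.TTheory GRing.Theory Num.Theory.
Local Open Scope ring_scope.

Section Basics.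
Variable C : numClosedFieldType.

Lemma adjE m n (A : 'M[C]_(m, n)) : adjmx A = (A ^t* )%sesqui.
Proof. by rewrite /adjmx map_trmx. Qed.

Lemma adjmxM m n p (A : 'M[C]_(m, n)) (B : 'M[C]_(n, p)) :
  adjmx (A *m B) = adjmx B *m adjmx A.
Proof. by rewrite /adjmx map_mxM trmx_mul. Qed.

Lemma adjmxK m n (A : 'M[C]_(m, n)) : adjmx (adjmx A) = A.
Proof.
apply/matrixP => i j; rewrite !mxE; exact: conjCK.
Qed.

Lemma adjmxD m n (A B : 'M[C]_(m, n)) : adjmx (A + B) = adjmx A + adjmx B.
Proof. by apply/matrixP => i j; rewrite !mxE rmorphD. Qed.

Lemma adjmxN m n (A : 'M[C]_(m, n)) : adjmx (- A) = - adjmx A.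
Proof. by apply/matrixP => i j; rewrite !mxE rmorphN. Qed.

Lemma adjmxZ m n a (A : 'M[C]_(m, n)) : adjmx (a *: A) = a^* *: adjmx A.
Proof. by apply/matrixP => i j; rewrite !mxE rmorphM. Qed.

Lemma adjmx_sum m n I (r : seq I) (F : I -> 'M[C]_(m, n)) :
  adjmx (\sum_(i <- r) F i) = \sum_(i <- r) adjmx (F i).
Proof.
elim: r => [|x r IH]; first by rewrite !big_nil; apply/matrixP=> i j; rewrite !mxE rmorph0.
by rewrite !big_cons adjmxD IH.
Qed.

Lemma adjmx_diag n (d : 'rV[C]_n) : adjmx (diag_mx d) = diag_mx (map_mx Num.conj d).
Proof.
apply/matrixP => i j; rewrite !mxE eq_sym; case: eqP => [->|]; rewrite ?mulr1n ?mulr0n ?rmorph0 //.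

Qed.

Lemma adjmx1 n : adjmx (1%:M : 'M[C]_n) = 1%:M.
Proof.
apply/matrixP => i j; rewrite !mxE eq_sym; case: eqP => _; rewrite ?rmorph1 ?rmorph0 //.
Qed.

Lemma adjmx_perm n (s : 'S_n) : adjmx (perm_mx s : 'M[C]_n) = perm_mx s^-1.
Proof. by rewrite /adjmx (map_perm_mx Num.conj) tr_perm_mx. Qed.

Lemma unitaryE n (U : 'M[C]_n) : Defs.is_unitary U <-> U \is unitarymx.
Proof. by rewrite /Defs.is_unitary adjE; split => [H|/unitarymxP //]; apply/unitarymxP. Qed.

Lemma unitaryC n (U : 'M[C]_n) : Defs.is_unitary U -> adjmx U *m U = 1%:M.
Proof. by move=> /mulmx1C. Qed.

Lemma unitary_adj n (U : 'M[C]_n) : Defs.is_unitary U -> Defs.is_unitary (adjmx U).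
Proof. by move=> H; rewrite /Defs.is_unitary adjmxK; apply: unitaryC. Qed.

Lemma unitaryM n (U V : 'M[C]_n) : Defs.is_unitary U -> Defs.is_unitary V -> Defs.is_unitary (U *m V).
Proof.
move=> HU HV; rewrite /Defs.is_unitary adjmxM mulmxA -(mulmxA U) HV mulmx1 //.
Qed.

Lemma unitary1 n : Defs.is_unitary (1%:M : 'M[C]_n).
Proof. by rewrite /Defs.is_unitary adjmx1 mulmx1. Qed.

Lemma unitary_perm n (s : 'S_n) : Defs.is_unitary (perm_mx s : 'M[C]_n).
Proof. by rewrite /Defs.is_unitary adjmx_perm -perm_mxM mulgV perm_mx1. Qed.

Lemma normalE n (A : 'M[C]_n) : is_normal A <-> A \is normalmx.
Proof. by rewrite /is_normal !adjE; split => [H|/normalmxP //]; apply/normalmxP. Qed.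

Lemma spectral n (A : 'M[C]_n) : is_normal A ->
  exists P d, Defs.is_unitary P /\ A = adjmx P *m diag_mx d *m P.
Proof.
move=> /normalE /orthomx_spectralP HA.
exists (spectralmx A), (spectral_diag A); split.
  by apply/unitaryE; exact: spectral_unitarymx.
by rewrite adjE -invmx_unitary ?spectral_unitarymx.
Qed.

End Basics.

Section Norm.
Variable C : numClosedFieldType.
Variable m : nat.
Local Notation n := m.+1.
Variable nu : 'M[C]_n -> C.
Hypothesis Hnorm : is_mxnorm nu.
Hypothesis Hui : unitarily_invariant nu.

Lemma nu_ge0 X : 0 <= nu X. Proof. by case: Hnorm. Qed.
Lemma nu_eq0 X : nu X = 0 -> X = 0. Proof. by case: Hnorm => _ [H _]; exact: H. Qed.
Lemma nuZ a X : nu (a *: X) = `|a| * nu X. Proof. by case: Hnorm => _ [_ [H _]]; exact: H. Qed.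
Lemma nuD X Y : nu (X + Y) <= nu X + nu Y. Proof. by case: Hnorm => _ [_ [_ H]]; exact: H. Qed.
Lemma nu0 : nu 0 = 0.
Proof. by rewrite -(scale0r (0 : 'M[C]_n)) nuZ normr0 mul0r. Qed.

Lemma nu_sum I (r : seq I) (F : I -> 'M[C]_n) :
  nu (\sum_(i <- r) F i) <= \sum_(i <- r) nu (F i).
Proof.
elim: r => [|x r IH]; first by rewrite !big_nil nu0.
rewrite !big_cons; apply: le_trans (nuD _ _) _; exact: lerD.
Qed.

Lemma nu_mulU U X : Defs.is_unitary U -> nu (U *m X) = nu X.
Proof. by move=> HU; rewrite -[U *m X]mulmx1 Hui //; exact: unitary1. Qed.

Lemma nu_conjU U X : Defs.is_unitary U -> nu (U *m X *m adjmx U) = nu X.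
Proof. by move=> HU; rewrite Hui //; exact: unitary_adj. Qed.

Lemma nu1_gt0 : 0 < nu 1%:M.
Proof.
rewrite lt_def nu_ge0 andbT; apply/eqP => /nu_eq0 /matrixP /(_ ord0 ord0).
by rewrite !mxE /= => /eqP; rewrite oner_eq0.
Qed.

Definition sgnmx (k : nat) : 'M[C]_n :=
  diag_mx (\row_(i < n) (if (i : nat) == k then -1 else 1)).

Lemma sgnmx_unitary k : Defs.is_unitary (sgnmx k).
Proof.
rewrite /Defs.is_unitary adjmx_diag; apply/matrixP => i j.
rewrite mul_diag_mx !mxE; case: (i == k :> nat); case: eqP => _;
  rewrite ?mulr0n ?mulr0 ?mulr1n ?rmorphN ?rmorph1 //= ?mulrNN ?mulr1 //.
Qed.

Fixpoint zmx (X : 'M[C]_n) (k : nat) : 'M[C]_n :=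
  if k is k'.+1 then 2^-1 *: (zmx X k' + sgnmx k' *m zmx X k' *m sgnmx k')
  else X.

Lemma zmxE X k i j : zmx X k i j =
  if (i == j) || ((k <= i)%N && (k <= j)%N) then X i j else 0.
Proof.
elim: k => [|k IH] /=; first by rewrite orbT.
rewrite mul_diag_mx mul_mx_diag !mxE IH.
have half : forall y : C, 2^-1 * (y + y) = y.
  by move=> y; field.
case: (eqVneq i j) => [e|ne] /=; first subst j.
  by case: (i == k :> nat); rewrite ?mulN1r ?mulrN1 ?opprK ?mul1r ?mulr1 half.
case: (ltngtP k i) => hi; case: (ltngtP k j) => hj /=;
  rewrite ?mul1r ?mulr1 ?mulN1r ?mulrN1 ?opprK ?addr0 ?subrr ?mulr0 ?oppr0 ?half //.
by move: ne; rewrite -val_eqE /= -hi -hj eqxx.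
Qed.



Lemma zmx_nu X k : nu (zmx X k) <= nu X.
Proof.
elim: k => [|k IH] //=.
rewrite nuZ; apply: le_trans (_ : `|2^-1| * (nu (zmx X k) + nu (zmx X k)) <= _).
  rewrite ler_wpM2l //; apply: le_trans (nuD _ _) _.
  by rewrite (Hui _ (sgnmx_unitary k) (sgnmx_unitary k)).
rewrite ger0_norm ?invr_ge0 ?ler0n //.
have -> : (2^-1 * (nu (zmx X k) + nu (zmx X k))) = nu (zmx X k) by field.
exact: IH.
Qed.

Lemma zmx_diag X : zmx X n = diag_mx (\row_i X i i).
Proof.
apply/matrixP => i j; rewrite zmxE !mxE.
have -> : (n <= i)%N = false by rewrite leqNgt ltn_ord.
rewrite /= orbF.
by case: eqVneq => [->|]; rewrite ?mulr1n ?mulr0n.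
Qed.


Lemma perm_diag_conj n' (s : 'S_n') (d : 'rV[C]_n') :
  perm_mx s *m diag_mx d *m adjmx (perm_mx s) = diag_mx (\row_i d 0 (s i)).
Proof.
rewrite adjmx_perm -row_permE -col_permE; apply/matrixP => i j.
by rewrite !mxE (inj_eq perm_inj).
Qed.

Definition rot (k : 'I_n) : 'S_n := perm (addrI k).

Lemma rot_sum (d : 'rV[C]_n) :
  \sum_(k < n) diag_mx (\row_i d 0 (rot k i)) = (\sum_j d 0 j)%:M.
Proof.
apply/matrixP => i j; rewrite summxE !mxE.
under eq_bigr do rewrite !mxE permE.
rewrite sumrMnl; congr (_ *+ _).
by rewrite [RHS](reindex_inj (addIr i)).
Qed.

Lemma trace_bound X : `|\tr X| * nu 1%:M <= n%:R * nu X.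
Proof.
have eD : \tr X = \sum_j (\row_i X i i) 0 j.
  by rewrite /mxtrace; apply: eq_bigr => i _; rewrite mxE.
rewrite -nuZ scalemx1 eD -rot_sum.
apply: le_trans (nu_sum _ _) _.
have h k : nu (diag_mx (\row_i (\row_i X i i) 0 (rot k i))) = nu (zmx X n).
  by rewrite -perm_diag_conj nu_conjU ?zmx_diag //; exact: unitary_perm.
under eq_bigr do rewrite h.
rewrite sumr_const card_ord -(mulr_natl (nu (zmx X n))) ler_wpM2l ?ler0n //; exact: zmx_nu.
Qed.


Lemma key_lemma Y : Y *m Y = 1%:M -> nu Y <= nu 1%:M -> adjmx Y = Y.
Proof.
move=> YY nuY.
set H := adjmx Y *m Y.
have HN : is_normal H.
  by rewrite /is_normal /H adjmxM adjmxK.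
have [P [d [HP eH]]] := spectral HN.
have HP' := unitaryC HP.
set B := Y *m adjmx P.
have eD : diag_mx d = adjmx B *m B.
  rewrite /B adjmxM adjmxK !mulmxA -(mulmxA P) -/H eH.
  by rewrite !mulmxA HP mul1mx -!mulmxA HP mulmx1.
have dge0 i : 0 <= d 0 i.
  have := congr1 (fun M : 'M[C]_n => M i i) eD; rewrite !mxE eqxx mulr1n => ->.
  apply: sumr_ge0 => k _; rewrite !mxE mulrC; exact: mul_conjC_ge0.
have Yu : Y \in unitmx by case: (mulmx1_unit YY).
have aYu : adjmx Y \in unitmx.
  by case: (@mulmx1_unit _ _ (adjmx Y) (adjmx Y)) => //; rewrite -adjmxM YY adjmx1.
have Pu : P \in unitmx by case: (mulmx1_unit HP).
have aPu : adjmx P \in unitmx by case: (mulmx1_unit HP).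
have Du : diag_mx d \in unitmx.
  by rewrite eD /B adjmxM adjmxK !unitmx_mul Yu aYu Pu aPu.
have dne0 i : d 0 i != 0.
  move: Du; rewrite unitmxE det_diag unitfE => /prodf_neq0; exact.
pose sg i := sqrtC (d 0 i).
have sg_gt0 i : 0 < sg i.
  by rewrite sqrtC_gt0 lt_def dne0 dge0.
have sg_ne0 i : sg i != 0 by rewrite gt_eqF.
have sg2 i : sg i * sg i = d 0 i by rewrite -expr2 sqrtCK.
pose S := diag_mx (\row_i sg i).
pose Si := diag_mx (\row_i (sg i)^-1).
have SiS : Si *m S = 1%:M.
  apply/matrixP => i j; rewrite mulmx_diag !mxE mulVf //.
have aSi : adjmx Si = Si.
  rewrite adjmx_diag; congr diag_mx; apply/matrixP => i j; rewrite !mxE.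
  by rewrite geC0_conj // invr_ge0 ltW.
pose W := B *m Si.
have WW : adjmx W *m W = 1%:M.
  rewrite /W adjmxM aSi mulmxA -(mulmxA Si) -eD mulmx_diag mulmx_diag.
  apply/matrixP => i j; rewrite !mxE -sg2.
  by rewrite mulrA mulrAC mulVf // mul1r mulVf.
have WU : Defs.is_unitary W by rewrite /Defs.is_unitary; apply: mulmx1C.
have eY : Y = W *m S *m P.
  by rewrite /W -(mulmxA B) SiS mulmx1 /B -mulmxA HP' mulmx1.
have WU' : W *m adjmx W = 1%:M := WU.
clearbody W.
have t1 : \tr ((adjmx P *m adjmx W) *m Y) = \sum_i sg i.
  rewrite eY !mulmxA -(mulmxA _ (adjmx W)) WW mulmx1 mxtrace_mulC mulmxA HP mul1mx.
  by rewrite mxtrace_diag; apply: eq_bigr => i _; rewrite mxE.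
have eYi : Y = adjmx P *m Si *m adjmx W.
  have e1 : Y *m (adjmx P *m Si *m adjmx W) = 1%:M.
    rewrite eY !mulmxA -(mulmxA _ P) HP mulmx1 -(mulmxA _ S) mulmx_diag.
    have -> : diag_mx (\row_j ((\row_i sg i) 0 j * (\row_i (sg i)^-1) 0 j)) = 1%:M.
      apply/matrixP => i j; rewrite !mxE mulfV //.
    by rewrite mulmx1.
  by rewrite -[RHS]mul1mx -YY -mulmxA e1 mulmx1.
have t2 : \tr ((W *m P) *m Y) = \sum_i (sg i)^-1.
  rewrite eYi !mulmxA -(mulmxA W) HP mulmx1 mxtrace_mulC mulmxA WW mul1mx.
  by rewrite mxtrace_diag; apply: eq_bigr => i _; rewrite mxE.
have U1 : Defs.is_unitary (adjmx P *m adjmx W).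
  by apply: unitaryM; apply: unitary_adj.
have U2 : Defs.is_unitary (W *m P) by apply: unitaryM.
have nu1 := nu1_gt0.
have b1 : \sum_i sg i <= n%:R.
  have := trace_bound ((adjmx P *m adjmx W) *m Y).
  rewrite nu_mulU // t1 ger0_norm; last by apply: sumr_ge0 => i _; apply: ltW.
  move=> h; rewrite -(ler_pM2r nu1); apply: le_trans h _.
  by rewrite ler_wpM2l ?ler0n.
have b2 : \sum_i (sg i)^-1 <= n%:R.
  have := trace_bound ((W *m P) *m Y).
  rewrite nu_mulU // t2 ger0_norm; last by apply: sumr_ge0 => i _; rewrite invr_ge0 ltW.
  move=> h; rewrite -(ler_pM2r nu1); apply: le_trans h _.
  by rewrite ler_wpM2l ?ler0n.
pose F i := sg i + (sg i)^-1 - 2.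
have FE i : F i = (sg i - 1) ^+ 2 / sg i.
  by rewrite /F; field; apply: sg_ne0.
have Fge0 i : 0 <= F i.
  rewrite FE divr_ge0 ?(ltW (sg_gt0 i)) // -realEsqr rpredB // ?ger0_real ?(ltW (sg_gt0 i)) //.
have sF : \sum_i F i = 0.
  apply/le_anti/andP; split; last by apply: sumr_ge0 => i _; exact: Fge0.
  rewrite /F !big_split /= sumrN sumr_const card_ord.
  rewrite subr_le0 mulrnAC mulr2n.
  exact: lerD.
have sg1 i : sg i = 1.
  have h : F i = 0 := psumr_eq0P (fun i _ => Fge0 i) sF (isT : predT i).
  move: h; rewrite FE => /eqP; rewrite mulf_eq0 invr_eq0 (negPf (sg_ne0 i)) orbF.
  by rewrite sqrf_eq0 subr_eq0 => /eqP.
have D1 : diag_mx d = 1%:M.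
  apply/matrixP => i j; rewrite !mxE -sg2 sg1 mulr1 //.
have H1 : H = 1%:M by rewrite eH D1 mulmx1 HP'.
by rewrite -[LHS]mulmx1 -YY mulmxA -/H H1 mul1mx.
Qed.
End Norm.

Section Poly.
Variable C : numClosedFieldType.
Variable m : nat.
Local Notation n := m.+1.

Lemma mxpowE (M : 'M[C]_n) i : mxpow M i = M ^+ i.
Proof.
elim: i => [|i IH]; first by rewrite expr0.
by rewrite /mxpow iterS -/(mxpow M i) IH exprS.
Qed.

Lemma mxevalE (p : {poly C}) (M : 'M[C]_n) : mxeval p M = horner_mx M p.
Proof.
rewrite /mxeval -[in RHS](coefK p) poly_def rmorph_sum /=; apply: eq_bigr => i _.
rewrite mxpowE -mul_polyC rmorphM /= horner_mx_C rmorphXn /= horner_mx_X.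
by rewrite -mul_scalar_mx.
Qed.

End Poly.

Lemma rank_diag (F : fieldType) k (v : 'rV[F]_k) :
  \rank (diag_mx v) = (\sum_i ((v ord0 i != 0%R) : nat))%N.
Proof.
elim: k v => [|k IH] v.
  by rewrite big_ord0; apply/eqP; rewrite -leqn0 rank_leq_row.
change (@mxrank F (1 + k) (1 + k) (@diag_mx F (1 + k) v) = (\sum_(i < 1 + k) ((v ord0 i != 0%R) : nat))%N).
rewrite -[v](@hsubmxK F 1 1 k v).
rewrite diag_mx_row rank_diag_block_mx IH.
rewrite big_split_ord /= big_ord1 (@row_mxEl F 1 1 k).
under [X in (_ = (_ + X))%N]eq_bigr do rewrite (@row_mxEr F 1 1 k).
congr (_ + _)%N.
have e1 : diag_mx (@lsubmx F 1 1 k v) = @lsubmx F 1 1 k v.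
  by apply/matrixP => i j; rewrite [i]ord1 [j]ord1 !mxE eqxx mulr1n.
rewrite e1 rank_rV; congr (nat_of_bool _).
apply/idP/idP => [/eqP h|/eqP h]; apply/eqP => h2; apply: h.
  by apply/matrixP => i j; rewrite [i]ord1 [j]ord1 h2 mxE.
by rewrite h2 mxE.
Qed.

Section Main.
Variable C : numClosedFieldType.
Variable m : nat.
Local Notation n := m.+1.
Variable nu : 'M[C]_n -> C.
Hypothesis Hnorm : is_mxnorm nu.
Hypothesis Hui : unitarily_invariant nu.
Variables N A : 'M[C]_n.
Hypothesis HN : is_normal N.
Hypothesis Hp : forall p : {poly C}, nu (mxeval p A) = nu (mxeval p N).

Lemma HpE p : nu (horner_mx A p) = nu (horner_mx N p).
Proof. by rewrite -!mxevalE. Qed.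

Lemma invmx_unitaryE (P : 'M[C]_n) : Defs.is_unitary P -> invmx P = adjmx P.
Proof. by move=> /unitaryE HP; rewrite adjE invmx_unitary. Qed.

Lemma unitary_unit (P : 'M[C]_n) : Defs.is_unitary P -> P \in unitmx.
Proof. by case/mulmx1_unit. Qed.

Lemma horner_conj (P : 'M[C]_n) (d : 'rV[C]_n) p :
  Defs.is_unitary P ->
  horner_mx (adjmx P *m diag_mx d *m P) p =
  adjmx P *m diag_mx (\row_i p.[d 0 i]) *m P.
Proof.
move=> HP; rewrite -invmx_unitaryE // horner_mx_uconjC ?unitary_unit //.
rewrite horner_mx_diag; congr (_ *m diag_mx _ *m _).
by apply/matrixP => i j; rewrite [i]ord1 !mxE.
Qed.

Lemma nu_adjconj (P X : 'M[C]_n) : Defs.is_unitary P -> nu (adjmx P *m X *m P) = nu X.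
Proof.
move=> HP; rewrite -{2}(adjmxK P) nu_conjU //; exact: unitary_adj.
Qed.

Variable P : 'M[C]_n.
Variable d : 'rV[C]_n.
Hypothesis HP : Defs.is_unitary P.
Hypothesis eN : N = adjmx P *m diag_mx d *m P.

Definition s := undup (codom (fun i : 'I_n => d 0 i)).
Lemma s_uniq : uniq s. Proof. exact: undup_uniq. Qed.
Lemma d_in_s i : d 0 i \in s.
Proof. by rewrite mem_undup; apply: (codom_f (fun i : 'I_n => d 0 i)). Qed.

Definition q : {poly C} := \prod_(a <- s) ('X - a%:P).

Lemma vanishN f : {in s, forall x, f.[x] = 0} -> horner_mx N f = 0.
Proof.
move=> hf; rewrite eN horner_conj //.
have -> : diag_mx (\row_i f.[d 0 i]) = 0.
  by apply/matrixP => i j; rewrite !mxE hf ?d_in_s // mul0rn.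
by rewrite mulmx0 mul0mx.
Qed.

Lemma qA : horner_mx A q = 0.
Proof.
apply: (nu_eq0 Hnorm); rewrite HpE vanishN ?(nu0 Hnorm) // => x xs.
by apply/rootP; rewrite root_prod_XsubC.
Qed.

Lemma vanishA f : {in s, forall x, f.[x] = 0} -> horner_mx A f = 0.
Proof.
move=> hf; have [g ->] : exists g, f = g * q.
  apply: uniq_roots_prod_XsubC; last by rewrite uniq_rootsE s_uniq.
  by apply/allP => x xs; apply/rootP; apply: hf.
by rewrite rmorphM /= qA mulr0.
Qed.


Definition L (l : C) : {poly C} := \prod_(b <- s | b != l) ((l - b)^-1 *: ('X - b%:P)).

Lemma L_eval l x : x \in s -> (L l).[x] = (x == l)%:R.
Proof.
move=> xs; rewrite /L horner_prod.
case: eqVneq => [->|nx].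
  apply: big1 => b bl; rewrite hornerZ hornerXsubC mulVf //.
  by rewrite subr_eq0 eq_sym.
rewrite big_mkcond (bigD1_seq x) //= ?s_uniq // nx.
by rewrite hornerZ hornerXsubC subrr mulr0 mul0r.
Qed.

Lemma hmxZ (M : 'M[C]_n) c p : horner_mx M (c *: p) = c *: horner_mx M p.
Proof. by rewrite -mul_polyC rmorphM /= horner_mx_C -mul_scalar_mx. Qed.

Definition E l := horner_mx A (L l).

Lemma diag_pm1_unitary (v : 'rV[C]_n) :
  (forall i, v 0 i = 1 \/ v 0 i = -1) -> Defs.is_unitary (diag_mx v).
Proof.
move=> hv; rewrite /Defs.is_unitary adjmx_diag mulmx_diag.
apply/matrixP => i j; rewrite !mxE.
by case: (hv i) => ->; rewrite ?rmorphN rmorph1 ?mulrNN mulr1.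
Qed.

Lemma adjE_l l : adjmx (E l) = E l.
Proof.
pose f := 1 - (L l) *+ 2.
have fval x : x \in s -> f.[x] = 1 - (x == l)%:R *+ 2.
  by move=> xs; rewrite /f !hornerE L_eval.
pose Y := horner_mx A f.
have YY : Y *m Y = 1%:M.
  have h : horner_mx A (f * f - 1) = 0.
    apply: vanishA => x xs; rewrite !hornerE L_eval //.
    by case: (x == l) => /=; ring.
  by move: h; rewrite rmorphB rmorphM rmorph1 /= => /eqP; rewrite subr_eq0 => /eqP.
have nuY : nu Y <= nu 1%:M.
  rewrite HpE eN horner_conj // nu_adjconj //.
  rewrite -[diag_mx _]mulmx1 -[_ *m 1%:M]mulmx1 Hui //; last exact: unitary1.
  apply: diag_pm1_unitary => i; rewrite !mxE fval ?d_in_s //.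
  case: (d 0 i == l); [right | left] => /=; ring.
have aY := key_lemma Hnorm Hui YY nuY.
have eE : E l = 2^-1 *: (1%:M - Y).
  have -> : 1%:M - Y = E l *+ 2.
    rewrite /Y /f rmorphB rmorphMn /= (rmorph1 (horner_mx A)) opprB addrCA.
    by rewrite [1%:M]/(1 : 'M[C]_n) subrr addr0.
  by rewrite -scaler_nat scalerA mulVf ?scale1r // pnatr_eq0.
rewrite eE adjmxZ adjmxD adjmxN aY adjmx1 rmorphV ?unitfE ?pnatr_eq0 //.
by rewrite rmorph_nat.
Qed.


Lemma sum_ind (g : C -> C) x : x \in s -> \sum_(l <- s) g l * (x == l)%:R = g x.
Proof.
move=> xs; rewrite (bigD1_seq x) //= ?s_uniq // eqxx mulr1 big1 ?addr0 //.
by move=> l lx; rewrite eq_sym (negPf lx) mulr0.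
Qed.

Lemma eA : A = \sum_(l <- s) l *: E l.
Proof.
have h : horner_mx A ('X - \sum_(l <- s) l *: L l) = 0.
  apply: vanishA => x xs; rewrite hornerD hornerN hornerX horner_sum.
  under eq_bigr do rewrite hornerZ L_eval //.
  by rewrite (sum_ind id) // subrr.
move: h; rewrite rmorphB rmorph_sum /= horner_mx_X => /eqP; rewrite subr_eq0 => /eqP ->.
by apply: eq_bigr => l _; rewrite hmxZ.
Qed.

Lemma A_normal : is_normal A.
Proof.
have adjA : adjmx A = horner_mx A (\sum_(l <- s) l^* *: L l).
  rewrite {1}eA adjmx_sum rmorph_sum /=; apply: eq_bigr => l _.
  by rewrite adjmxZ adjE_l hmxZ.
rewrite /is_normal adjA.
have := comm_horner_mx2 A 'X (\sum_(l <- s) l^* *: L l).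
by rewrite horner_mx_X.
Qed.


Lemma count_mk (f : 'I_n -> C) l :
  count_mem l [tuple f i | i < n] = (\sum_i (f i == l))%N.
Proof.
rewrite /= -sum1_count big_map big_enum_cond /= big_mkcond /=.
by apply: eq_bigr => i _; case: (f i == l).
Qed.

Lemma rank_conj_diag (Q : 'M[C]_n) (v : 'rV[C]_n) : Defs.is_unitary Q ->
  \rank (adjmx Q *m diag_mx v *m Q) = (\sum_i ((v ord0 i != 0%R) : nat))%N.
Proof.
move=> HQ; rewrite mxrankMfree; last by rewrite row_free_unit unitary_unit.
rewrite eqmxMfull; last by rewrite row_full_unit; apply/unitary_unit/unitary_adj.
by rewrite rank_diag.
Qed.

Lemma rank_L (Q : 'M[C]_n) (v : 'rV[C]_n) l : Defs.is_unitary Q ->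
  (forall i, v ord0 i \in s) ->
  \rank (adjmx Q *m diag_mx (\row_i (L l).[v ord0 i]) *m Q) = (\sum_i (v ord0 i == l))%N.
Proof.
move=> HQ hv; rewrite rank_conj_diag //; apply: eq_bigr => i _.
by rewrite mxE L_eval //; case: (v ord0 i == l); rewrite ?oner_eq0 ?eqxx.
Qed.

Lemma E_idem l : E l *m E l = E l.
Proof.
have h : horner_mx A (L l * L l - L l) = 0.
  apply: vanishA => x xs; rewrite !hornerE L_eval //.
  by case: (x == l) => /=; ring.
by move: h; rewrite rmorphB rmorphM /= => /eqP; rewrite subr_eq0 => /eqP.
Qed.

Lemma PN_proj l : is_orth_proj (horner_mx N (L l)).
Proof.
split.
  have h : horner_mx N (L l * L l - L l) = 0.
    apply: vanishN => x xs; rewrite !hornerE L_eval //.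
    by case: (x == l) => /=; ring.
  by move: h; rewrite rmorphB rmorphM /= => /eqP; rewrite subr_eq0 => /eqP.
rewrite eN horner_conj // !adjmxM adjmxK adjmx_diag mulmxA; congr (_ *m diag_mx _ *m _).
apply/matrixP => i j; rewrite !mxE L_eval ?d_in_s //.
by rewrite rmorph_nat.
Qed.

Lemma part2 : separates_proj_by_rank nu -> unitarily_similar A N.
Proof.
move=> Hsep.
have [Q [e [HQ eA2]]] := spectral A_normal.
have QQ' := unitaryC HQ.
have e_in_s i : e 0 i \in s.
  have h := qA; rewrite {1}eA2 horner_conj // in h.
  have h2 : diag_mx (\row_i q.[e 0 i]) = 0.
    have -> : diag_mx (\row_i q.[e 0 i]) =
      Q *m (adjmx Q *m diag_mx (\row_i q.[e 0 i]) *m Q) *m adjmx Q.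
      by rewrite !mulmxA HQ mul1mx -mulmxA HQ mulmx1.
    by rewrite h mulmx0 mul0mx.
  have := congr1 (fun M : 'M[C]_n => M i i) h2; rewrite !mxE eqxx mulr1n.
  by move=> /rootP; rewrite root_prod_XsubC.
have cnt l : (\sum_i (e ord0 i == l))%N = (\sum_i (d ord0 i == l))%N.
  case: (boolP (l \in s)) => ls; last first.
    rewrite !big1 // => i _;
      by case: eqP => // hl; move: ls; rewrite -hl ?e_in_s ?d_in_s.
  rewrite -(rank_L l HQ e_in_s) -(rank_L l HP d_in_s) -!horner_conj // -eA2 -eN.
  case: (eqVneq (\rank (horner_mx A (L l))) (\rank (horner_mx N (L l)))) => // hne; exfalso.
  have hpA : is_orth_proj (horner_mx A (L l)) by split; [exact: E_idem | exact: adjE_l].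
  exact: (@Hsep _ _ hpA (PN_proj l) (elimN eqP hne) (HpE _)).
have pe : perm_eq [tuple e ord0 i | i < n] [tuple d ord0 i | i < n].
  by rewrite /perm_eq; apply/allP => x _; apply/eqP; rewrite !count_mk; exact: cnt.
have [p hp] := tuple_permP pe.
have ep i : e ord0 i = d ord0 (p i).
  have := congr1 (fun t : seq C => nth 0 t i) hp.
  by rewrite /= !nth_mktuple tnth_mktuple.
have De : diag_mx e = perm_mx p *m diag_mx d *m adjmx (perm_mx p).
  rewrite perm_diag_conj; congr diag_mx; apply/matrixP => i j.
  by rewrite [i]ord1 mxE ep.
have Dd : diag_mx d = P *m N *m adjmx P.
  by rewrite eN !mulmxA HP mul1mx -mulmxA HP mulmx1.
exists (adjmx Q *m perm_mx p *m P); split.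
  apply: unitaryM => //; apply: unitaryM; [exact: unitary_adj | exact: unitary_perm].
by rewrite eA2 De Dd !adjmxM adjmxK !mulmxA.
Qed.

End Main.

Theorem theorem2p4 (C : numClosedFieldType) (n : nat) (nu : 'M[C]_n -> C)
  (Hnorm : is_mxnorm nu) (Hui : unitarily_invariant nu)
  (N A : 'M[C]_n) (HN : is_normal N)
  (Hp : forall p : {poly C}, nu (mxeval p A) = nu (mxeval p N)) :
  is_normal A /\ (separates_proj_by_rank nu -> unitarily_similar A N).
Proof.
move: nu Hnorm Hui N A HN Hp; case: n => [|m] nu Hnorm Hui N A HN Hp.
  split; first by apply/matrixP => [[]].
  move=> _; exists 1%:M; split; first exact: unitary1.
  by apply/matrixP => [[]].
have [P [d [HP eN]]] := spectral HN.
split.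
  exact: (A_normal Hnorm Hui Hp HP eN).
exact: (part2 Hnorm Hui Hp HP eN).
Qed.
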